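(* Let $k_1,k_2$ be natural numbers with $k_2>k_1$, let $\alpha>0$, and let $f(t)=\sum_{k\ge1}f_kt^k$ (with $f_1\neq0$) be a Pólya frequency power series. If for some positive integer $n$ it holds that $\alpha^{k_2-k_1}f_{k_1-n+1}>f_{k_2-n+1}$ (where $f_j=0$ for $j\le0$), then the quasi-Riordan array $\left[\frac1{1-\alpha t},f(t)\right]$ is not totally positive, although both $\frac1{1-\alpha t}$ and $f(t)$ are Pólya frequency power series.
   Context: For formal power series $g(t)=\sum_{n\ge0}g_nt^n$ with $g_0=1$ and $f(t)=\sum_{n\ge1}f_nt^n$ with $f_1\ne0$, the quasi-Riordan array $[g,f]$ is the infinite lower triangular matrix $(r_{n,k})_{n,k\ge0}$ with $r_{n,0}=g_n$ and $r_{n,k}=f_{n-k+1}$ for $k\ge1$ (with $f_j=0$ for $j\le0$), i.e. its columns have generating functions $g,f,tf,t^2f,\dots$. An infinite matrix is totally positive (TP) if all its minors are nonnegative. A sequence $(a_n)_{n\ge0}$ of nonnegative reals is a Pólya frequency sequence if its Toeplitz matrix $[a_{i-j}]_{i,j\ge0}$ (with $a_m=0$ for $m<0$) is TP; a formal power series is a Pólya frequency power series if its coefficient sequence is a Pólya frequency sequence. *)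

(* Defs.v *)
From HB Require Import structures.
From mathcomp Require Import all_boot all_order all_algebra.
From mathcomp Require Import reals.
Set Implicit Arguments. Unset Strict Implicit. Unset Printing Implicit Defensive.
Import Order.TTheory GRing.Theory Num.Theory.
Local Open Scope ring_scope.

Definition infmx (R : Type) := nat -> nat -> R.

Definition incr_idx (k : nat) (s : 'I_k -> nat) : Prop :=
  forall a b : 'I_k, (a < b)%N -> (s a < s b)%N.

Definition minor (R : comRingType) (M : infmx R) (k : nat)
  (r c : 'I_k -> nat) : R := \det (\matrix_(a < k, b < k) M (r a) (c b)).

Definition TP (R : realDomainType) (M : infmx R) : Prop :=
  forall (k : nat) (r c : 'I_k -> nat),
    incr_idx r -> incr_idx c -> 0 <= minor M r c.

Definition coefz (R : zmodType) (a : nat -> R) (j : int) : R :=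
  match j with Posz m => a m | Negz _ => 0 end.

Definition toeplitz (R : zmodType) (a : nat -> R) : infmx R :=
  fun i j => coefz a (i%:Z - j%:Z).

(* Polya frequency sequence (power series given by coefficient sequence). *)
Definition PF (R : realDomainType) (a : nat -> R) : Prop :=
  (forall n, 0 <= a n) /\ TP (toeplitz a).

Definition quasiRiordan (R : zmodType) (g f : nat -> R) : infmx R :=
  fun i j => match j with
             | 0%N => g i
             | _.+1 => coefz f (i%:Z - j%:Z + 1)
             end.

(* Main.v *)
Require Import Defs.
From HB Require Import structures.
From mathcomp Require Import all_boot all_order all_algebra.
From mathcomp Require Import reals zify ring.
Import Order.TTheory GRing.Theory Num.Theory.
Local Open Scope ring_scope.
Set Implicit Arguments. Unset Strict Implicit. Unset Printing Implicit Defensive.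

Lemma coefz_nat (R : zmodType) (a : nat -> R) i j :
  coefz a (i%:Z - j%:Z) = if (j <= i)%N then a (i - j)%N else 0.
Proof.
case: leqP => h; first by rewrite subzn.
have : i%:Z - j%:Z < 0 by rewrite subr_lt0 ltz_nat.
by case: (i%:Z - j%:Z).
Qed.

Lemma incr_le k (s : 'I_k -> nat) : incr_idx s -> forall a b : 'I_k, (a <= b)%N -> (s a <= s b)%N.
Proof.
move=> hs a b; rewrite leq_eqVlt => /orP [/eqP e|h].
  by have -> : a = b by apply: val_inj.
by apply: ltnW; apply: hs.
Qed.

Section Geo.
Variable R : realType.
Variable alpha : R.
Hypothesis ha : 0 < alpha.

Lemma geo_det k (r c : 'I_k -> nat) : incr_idx r -> incr_idx c ->
  0 <= \det (\matrix_(a < k, b < k) toeplitz (fun m => alpha ^+ m) (r a) (c b)).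
Proof.
elim: k r c => [|k IH] r c hr hc; first by rewrite det_mx00.
set A := \matrix_(a, b) _.
have hA : forall a b, A a b = if (c b <= r a)%N then alpha ^+ (r a - c b) else 0.
  by move=> a b; rewrite mxE /toeplitz coefz_nat.
have hr0 : forall a, (r ord0 <= r a)%N by move=> a; apply: incr_le.
have hc0 : forall b, (c ord0 <= c b)%N by move=> b; apply: incr_le.
case: (ltnP (r ord0) (c ord0)) => h0.
  rewrite (expand_det_row _ ord0) big1 // => b _.
  rewrite hA ifF ?mul0r //; apply/negbTE; rewrite -ltnNge.
  exact: (leq_trans h0).
case: (boolP [exists b : 'I_k.+1, (b != ord0) && (c b <= r ord0)%N]).
  case/existsP => b /andP [bn0 hb].
  have hcb : (c ord0 < c b)%N by apply: hc; rewrite lt0n.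
  pose B := \matrix_(i, j) A^T (if i == ord0 then b else i) j.
  rewrite -det_tr (@determinant_multilinear _ _ _ B A^T ord0 (alpha ^+ (c b - c ord0)) 0).
  - rewrite mul0r addr0 (@determinant_alternate _ _ B ord0 b) ?mulr0 //.
      by rewrite eq_sym.
    by move=> j; rewrite !mxE; case: ifP.
  - apply/matrixP => i j; rewrite !mxE mul0r addr0 /toeplitz !coefz_nat.
    rewrite (leq_trans hb (hr0 j)) (leq_trans h0 (hr0 j)) -exprD.
    congr (_ ^+ _).
    have := leq_trans hb (hr0 j); lia.
  - apply/matrixP => i j; rewrite !mxE.
    by [].
  - by [].
rewrite negb_exists => /forallP hall.
rewrite (expand_det_row _ ord0) big_ord_recl big1 ?addr0 => [|b _]; last first.
  have hl : lift ord0 b != ord0 by rewrite eq_sym neq_lift.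
  have := hall (lift ord0 b); rewrite negb_and hl /= -ltnNge => hb.
  by rewrite hA leqNgt hb mul0r.
apply: mulr_ge0; first by rewrite hA h0; apply: exprn_ge0; apply: ltW.
rewrite /cofactor /= expr0 mul1r.
set M := row' _ _.
have -> : M = \matrix_(a, b) toeplitz (fun m => alpha ^+ m) (r (lift ord0 a)) (c (lift ord0 b)).
  by apply/matrixP => a b; rewrite !mxE.
apply: IH.
  by move=> a b hab; apply: hr.
by move=> a b hab; apply: hc.
Qed.
End Geo.
Theorem proposition4p1 (R : realType) (k1 k2 : nat) (alpha : R)
  (f : nat -> R) (n : nat) :
  (k1 < k2)%N -> 0 < alpha ->
  f 0%N = 0 -> f 1%N != 0 -> PF f ->
  (0 < n)%N ->
  alpha ^+ (k2 - k1) * coefz f (k1%:Z - n%:Z + 1) > coefz f (k2%:Z - n%:Z + 1) ->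
  ~ TP (quasiRiordan (fun m => alpha ^+ m) f)
  /\ PF (fun m => alpha ^+ m) /\ PF f.
Proof.
move=> hk ha f0 f1 hf hn hineq.
split; last split; last by [].
  move=> /(_ 2%N (fun a => if val a == 0%N then k1 else k2)
                 (fun a => if val a == 0%N then 0%N else n)).
  have i2 : forall a b : 'I_2, (a < b)%N -> val a = 0%N /\ val b = 1%N.
    by case=> [[|[|?]] ?] // [[|[|?]] ?].
  move=> H.
  have := H _ _; rewrite leNgt => /(_ _ _)/negP; apply.
  - by move=> a b /i2 [-> ->].
  - by move=> a b /i2 [-> ->].
  rewrite /minor (expand_det_row _ ord0) big_ord_recl big_ord1 /cofactor.
  rewrite !det_mx11 !mxE /=.
  case: n hn hineq {H i2} => // n' _ hineq.
  rewrite /quasiRiordan /= expr0 mul1r /bump /= expr1 mulN1r.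
  have hx : 0 < alpha ^+ k1 by apply: exprn_gt0.
  have -> : alpha ^+ k2 = alpha ^+ k1 * alpha ^+ (k2 - k1).
    by rewrite -exprD subnKC // ltnW.
  move: hineq hx.
  set F1 := coefz _ _; set F2 := coefz _ _; set x := alpha ^+ k1; set y := alpha ^+ _.
  move=> hineq hx.
  have h : 0 < x * (y * F2 - F1) by rewrite mulr_gt0 // subr_gt0.
  rewrite -subr_gt0; move: h.
  by congr (0 < _); ring.
split; first by move=> m; apply: exprn_ge0; apply: ltW.
move=> k r c hr hc; exact: geo_det.
Qed.
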